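(* Let $\mathcal{M}$ be a separable metric space, let $f:\mathcal{M}\to\mathcal{M}$ be a continuous bijection with continuous inverse, and let $\mathcal{X}\subseteq\mathcal{M}$ be forward invariant under $f$ and path connected. Consider $x_{k+1}=f(x_k)$ on $\mathcal{X}$, with set of $\omega$-limit sets $\mathcal{W}$ and set of $\alpha$-limit sets $\mathcal{A}$. Suppose: every trajectory in $\mathcal{X}$ is forward precompact or backward precompact in $\mathcal{X}$; $\mathcal{W}\cup\mathcal{A}$ is countable; for every $\Omega\in\mathcal{W}$ there is a trajectory forward precompact in $\mathcal{X}$ starting in $D^+_{\mathcal{X}}(\Omega)$, and for every $\Gamma\in\mathcal{A}$ a trajectory backward precompact in $\mathcal{X}$ starting in $D^-_{\mathcal{X}}(\Gamma)$. If $\mathcal{W}\cup\mathcal{A}$ has more than one element, then there do not exist a separable metric space $\mathcal{Z}$, a continuous bijection $g:\mathcal{Z}\to\mathcal{Z}$ with continuous inverse such that $z_{k+1}=g(z_k)$ and its time reversal $z_{k+1}=g^{-1}(z_k)$ both have closed basins (e.g., an invertible linear system), and a continuous one-to-one map $F:\mathcal{X}\to\mathcal{Z}$ with $F\circ f=g\circ F$ on $\mathcal{X}$.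
   Context: Forward orbit of $\xi$: $\{f^k(\xi)\mid k\in\mathbb{N}\}$; backward orbit: $\{f^{-k}(\xi)\mid k\in\mathbb{N}\}$. A set $S\subseteq\mathcal{X}$ is precompact if its closure in $\mathcal{X}$ is compact; a trajectory is forward (backward) precompact if its forward (backward) orbit is precompact. $\omega_{\mathcal{X}}(\xi)$ is the set of $x\in\mathcal{X}$ with $f^{k_j}(\xi)\to x$ for some $k_j\to\infty$; $\alpha_{\mathcal{X}}(\xi)$ likewise with $f^{-k_j}$. $\mathcal{W}=\{\omega_{\mathcal{X}}(\xi)\mid\xi\in\mathcal{X}\}$, $\mathcal{A}=\{\alpha_{\mathcal{X}}(\xi)\mid\xi\in\mathcal{X}\}$, $D^+_{\mathcal{X}}(\Omega)=\{\xi\in\mathcal{X}\mid\omega_{\mathcal{X}}(\xi)=\Omega\}$, $D^-_{\mathcal{X}}(\Gamma)=\{\xi\in\mathcal{X}\mid\alpha_{\mathcal{X}}(\xi)=\Gamma\}$. A system has closed basins if the domain of attraction of each of its $\omega$-limit sets is closed (for a time reversal: each domain of repulsion of each $\alpha$-limit set of the original system is closed). Same notions on $\mathcal{Z}$ for $g$. *)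

(* Defs.v *)
From HB Require Import structures.
From mathcomp Require Import all_boot all_order all_algebra.
From mathcomp Require Import all_classical all_reals all_analysis.

Set Implicit Arguments.
Unset Strict Implicit.
Unset Printing Implicit Defensive.

Import Order.TTheory GRing.Theory Num.Theory.
Import numFieldNormedType.Exports.
Local Open Scope classical_set_scope.
Local Open Scope ring_scope.

Definition separable (T : topologicalType) : Prop :=
  exists D : set T, countable D /\ closure D = setT.

Definition path_connected (R : realType) (T : topologicalType) (X : set T) : Prop :=
  forall x y, X x -> X y ->
    exists gam : R -> T,
      {within `[0, 1]%classic, continuous gam} /\ gam 0 = x /\ gam 1 = y /\
      (forall t, `[0, 1]%classic t -> X (gam t)).

Definition fwd_orbit (T : Type) (f : T -> T) (xi : T) : set T :=
  [set iter k f xi | k in [set: nat]].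
Definition bwd_orbit (T : Type) (finv : T -> T) (xi : T) : set T :=
  fwd_orbit finv xi.

(* S ⊆ X is precompact in X: its closure in X (i.e. closure S ∩ X, with the
   subspace topology) is compact. *)
Definition precompact_in (T : topologicalType) (X S : set T) : Prop :=
  S `<=` X /\ compact (closure S `&` X).

Definition nat_seq_to_oo (k : nat -> nat) : Prop :=
  forall N, exists J, forall j, (J <= j)%N -> (N <= k j)%N.

Definition limset (T : topologicalType) (X : set T) (h : T -> T) (xi : T)
  : set T :=
  [set x | X x /\ exists k : nat -> nat, nat_seq_to_oo k /\
                   (fun j => iter (k j) h xi) @ \oo --> x].

Definition omega_lim (T : topologicalType) (X : set T) (f : T -> T) xi :=
  limset X f xi.
Definition alpha_lim (T : topologicalType) (X : set T) (finv : T -> T) xi :=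
  limset X finv xi.

Definition omega_sets (T : topologicalType) (X : set T) (f : T -> T)
  : set (set T) := [set omega_lim X f xi | xi in X].
Definition alpha_sets (T : topologicalType) (X : set T) (finv : T -> T)
  : set (set T) := [set alpha_lim X finv xi | xi in X].

Definition dom_attr (T : topologicalType) (X : set T) (f : T -> T) (O : set T)
  : set T := [set xi | X xi /\ omega_lim X f xi = O].
Definition dom_rep (T : topologicalType) (X : set T) (finv : T -> T) (G : set T)
  : set T := [set xi | X xi /\ alpha_lim X finv xi = G].

(* Applied to
   g^{-1} this expresses closed basins of the time reversal (domains of
   repulsion of the alpha-limit sets of g are closed). *)
Definition closed_basins (T : topologicalType) (g : T -> T) : Prop :=
  forall O, omega_sets setT g O -> closed (dom_attr setT g O).

(* Main.v *)
Require Import Defs.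
From HB Require Import structures.
From mathcomp Require Import all_boot all_order all_algebra.
From mathcomp Require Import all_classical all_reals all_analysis.
From mathcomp Require Import lra.
Set Implicit Arguments.
Unset Strict Implicit.
Unset Printing Implicit Defensive.
Import Order.TTheory GRing.Theory Num.Theory.
Import numFieldNormedType.Exports.
Local Open Scope classical_set_scope.
Local Open Scope ring_scope.
Section Gen.
Context {R : realType}.

Lemma limsetP {M : metricType R} (X : set M) h xi x :
  limset X h xi x <-> X x /\ (forall e : R, 0 < e -> forall N,
     exists2 k, (N <= k)%N & ball x e (iter k h xi)).
Proof.
split.
  move=> [Xx [k [kto cv]]]; split => // e e0 N.
  have [J0 _ HJ0] := cvg_ball cv e0.
  have [J HJ] := kto N.
  exists (k (maxn J J0)); first exact: HJ (leq_maxl _ _).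
  exact: (HJ0 (maxn J J0) (leq_maxr _ _)).
move=> [Xx H]; split => //.
have : forall j : nat, exists k, (j <= k)%N /\ ball x (j.+1%:R^-1) (iter k h xi).
  move=> j; have [|k jk bk] := H (j.+1%:R^-1) _ j; first by rewrite invr_gt0.
  by exists k.
move=> /choice[k Hk]; exists k; split.
  by move=> N; exists N => j Nj; apply: (leq_trans Nj); have [] := Hk j.
apply/cvg_ballP => e e0.
have := near_infty_natSinv_lt (PosNum e0); move=> [J _ HJ].
exists J => // j /= Jj; have [_ bj] := Hk j.
apply: (le_ball _ bj); exact: ltW (HJ j Jj).
Qed.

Lemma wcontP {M Z : pseudoMetricType R} (X : set M) (F : M -> Z) :
  {within X, continuous F} -> forall x, X x -> forall e : R, 0 < e ->
  exists2 d : R, 0 < d & forall w, X w -> ball x d w -> ball (F x) e (F w).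
Proof.
move=> /subspace_continuousP FC x Xx e e0.
have := FC x Xx (ball (F x) e) (nbhsx_ballx _ _ e0).
rewrite /= nbhs_simpl /= => /nbhs_ballP[d d0 Hd].
by exists d => // w Xw xw; apply: (Hd w xw Xw).
Qed.

Lemma cluster_seq {M : metricType R} (K : set M) (u : nat -> M) :
  compact K -> (forall n, K (u n)) ->
  exists2 x, K x & (forall e : R, 0 < e -> forall N,
     exists2 n, (N <= n)%N & ball x e (u n)).
Proof.
move=> cK Ku.
have FK : (u @ \oo) K by exists 0%N => // n _; apply: Ku.
have [x [Kx clx]] := cK _ _ FK.
exists x => // e e0 N.
have FN : (u @ \oo) (u @` [set n | (N <= n)%N]).
  by exists N => // n /= Nn; exists n.
have [_ [[n Nn <-] bn]] := clx _ _ FN (nbhsx_ballx _ _ e0).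
by exists n.
Qed.

Lemma pc_sub {M : metricType R} (X S : set M) :
  precompact_in X S -> closure S `<=` X /\ compact (closure S).
Proof.
move=> [SX cK].
have clK : closed (closure S `&` X) by apply: compact_closed => //; exact: metric_hausdorff.
have sub : closure S `<=` closure S `&` X.
  move=> s Ss; apply: clK; move: s Ss; apply: closure_subset => s Ss.
  by split; [exact: subset_closure | exact: SX].
have eq : closure S `&` X = closure S.
  by apply/seteqP; split => [s []//|s Ss]; apply: sub.
by split; [move=> s /sub[] | rewrite -eq].
Qed.

Lemma limset_shift {M : metricType R} (X : set M) h k z :
  limset X h (iter k h z) = limset X h z.
Proof.
apply/seteqP; split => x /limsetP[Xx H]; apply/limsetP; split => // e e0 N.
  have [j Nj bj] := H e e0 N; exists (j + k)%N; first exact: leq_trans Nj (leq_addr _ _).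
  by rewrite iterD.
have [j Nj bj] := H e e0 (N + k)%N; exists (j - k)%N.
  by rewrite leq_subRL ?(leq_trans (leq_addl _ _) Nj) // addnC.
rewrite -iterD subnK //; exact: leq_trans (leq_addl _ _) Nj.
Qed.

Lemma iter_cont {M : metricType R} (h : M -> M) n : continuous h -> continuous (iter n h).
Proof.
move=> hC; elim: n => [|n IH] x /=; first exact: cvg_id.
exact: continuous_comp (IH x) (hC _).
Qed.

End Gen.
Section Gen2.
Context {R : realType} {M Z : metricType R} (X : set M) (F : M -> Z).
Hypothesis FC : {within X, continuous F}.

Lemma omega_conj (h : M -> M) (hz : Z -> Z) y :
  precompact_in X (fwd_orbit h y) ->
  (forall k, F (iter k h y) = iter k hz (F y)) ->
  limset setT hz (F y) = F @` limset X h y.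
Proof.
move=> pc Hc.
have [KX cK] := pc_sub pc.
have orbK : forall k, closure (fwd_orbit h y) (iter k h y).
  by move=> k; apply: subset_closure; exists k.
apply/seteqP; split.
- move=> z [_ [k [kto cv]]].
  have [x Kx clx] := cluster_seq cK (fun j => orbK (k j)).
  exists x.
    apply/limsetP; split; first exact: KX.
    move=> e e0 N; have [J HJ] := kto N; have [j Jj bj] := clx e e0 J.
    by exists (k j) => //; apply: HJ.
  apply: (close_eq (@metric_hausdorff _ Z)); rewrite ball_close => eps.
  have e2 : 0 < eps%:num / 2 by [].
  have [d d0 Hd] := wcontP FC (KX _ Kx) e2.
  have [J0 _ HJ0] := cvg_ball cv e2.
  have [j Jj bj] := clx d d0 J0.
  have h1 := Hd _ (KX _ (orbK (k j))) bj.
  have h2 := HJ0 j Jj.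
  rewrite Hc in h1.
  by have := ball_triangle h1 (ball_sym h2); rewrite -splitr.
- move=> _ [x /limsetP[Xx H] <-]; apply/limsetP; split => // e e0 N.
  have [d d0 Hd] := wcontP FC Xx e0.
  have [k Nk bk] := H d d0 N; exists k => //.
  by rewrite -Hc; apply: Hd => //; apply: KX; apply: orbK.
Qed.

Lemma bwd_to_fwd (h hinv : M -> M) (hz : Z -> Z) xi :
  continuous h -> cancel hinv h -> closed_basins hz ->
  precompact_in X (fwd_orbit hinv xi) ->
  (forall k, iter k hz (F (iter k hinv xi)) = F xi) ->
  exists y, [/\ limset X hinv xi y, precompact_in X (fwd_orbit h y) &
     limset setT hz (F y) = limset setT hz (F xi)].
Proof.
move=> hC hK cb pc Hc.
have [KX cK] := pc_sub pc.
have orbK : forall k, closure (fwd_orbit hinv xi) (iter k hinv xi).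
  by move=> k; apply: subset_closure; exists k.
have [y Ky cly] := cluster_seq cK orbK.
have Xy := KX _ Ky.
exists y; split.
- by apply/limsetP; split.
- have iterK : forall n k, (n <= k)%N -> iter n h (iter k hinv xi) = iter (k - n) hinv xi.
    elim => [|n IH] k nk; first by rewrite subn0.
    rewrite iterS IH; last exact: ltnW.
    have -> : (k - n = (k - n.+1).+1)%N by rewrite subnSK.
    by rewrite iterS hK.
  have sub : fwd_orbit h y `<=` closure (fwd_orbit hinv xi).
    move=> _ [n _ <-] B /nbhs_ballP[e e0 Be].
    have := (@iter_cont _ _ h n hC) y (ball _ e) (nbhsx_ballx _ _ e0).
    rewrite nbhs_simpl => /nbhs_ballP[d d0 Hd].
    have [k nk bk] := cly d d0 n.
    exists (iter (k - n) hinv xi); split; first by exists (k - n)%N.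
    by apply: Be; rewrite -iterK //; exact: Hd.
  have sub2 : closure (fwd_orbit h y) `<=` closure (fwd_orbit hinv xi).
    move=> w /(closure_subset sub); apply: closed_closure.
  split; first by move=> w /sub /KX.
  have -> : closure (fwd_orbit h y) `&` X = closure (fwd_orbit h y).
    by apply/seteqP; split => [w []//|w cw]; split => //; apply/KX/sub2.
  apply: (subclosed_compact _ cK) => //; exact: closed_closure.
- set Om := limset setT hz (F xi).
  have OmW : omega_sets setT hz Om by exists (F xi).
  have cl := cb _ OmW.
  suff : dom_attr setT hz Om (F y) by case.
  apply: cl => B /nbhs_ballP[e e0 Be].
  have [d d0 Hd] := wcontP FC Xy e0.
  have [k _ bk] := cly d d0 0%N.
  exists (F (iter k hinv xi)); split.
    split => //; rewrite /omega_lim -(limset_shift _ _ k) Hc //.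
  by apply: Be; apply: Hd => //; apply: KX; apply: orbK.
Qed.

End Gen2.
Section Gen3.
Context {R : realType}.

Lemma iterK_sub {T : Type} (h hinv : T -> T) : cancel hinv h ->
  forall n k x, (n <= k)%N -> iter n h (iter k hinv x) = iter (k - n) hinv x.
Proof.
move=> hK; elim => [|n IH] k x nk; first by rewrite subn0.
rewrite iterS IH; last exact: ltnW.
have -> : (k - n = (k - n.+1).+1)%N by rewrite subnSK.
by rewrite iterS hK.
Qed.

Lemma iterKK {T : Type} (h hinv : T -> T) : cancel hinv h ->
  forall k x, iter k h (iter k hinv x) = x.
Proof. by move=> hK k x; rewrite (iterK_sub hK) // subnn. Qed.

Lemma limset_trans {M : metricType R} (X : set M) (h hinv : M -> M) xi y w :
  cancel h hinv -> continuous hinv ->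
  limset X h xi y -> limset X hinv y w -> limset X h xi w.
Proof.
move=> hK hiC /limsetP[Xy Hy] /limsetP[Xw Hw]; apply/limsetP; split => // e e0 N.
have e2 : 0 < e / 2 by rewrite divr_gt0.
have [m _ bm] := Hw _ e2 0%N.
have := (@iter_cont _ _ hinv m hiC) y (ball _ (e / 2)) (nbhsx_ballx _ _ e2).
rewrite nbhs_simpl => /nbhs_ballP[d d0 Hd].
have [k Nk bk] := Hy d d0 (N + m)%N.
have mk : (m <= k)%N by apply: leq_trans Nk; rewrite leq_addl.
exists (k - m)%N; first by rewrite leq_subRL // addnC.
rewrite -(iterK_sub hK) //.
by have := ball_triangle bm (Hd _ bk); rewrite -splitr.
Qed.

Lemma limset_ne {M : metricType R} (X : set M) (h : M -> M) xi :
  precompact_in X (fwd_orbit h xi) -> exists y, limset X h xi y.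
Proof.
move=> pc; have [KX cK] := pc_sub pc.
have orbK : forall k, closure (fwd_orbit h xi) (iter k h xi).
  by move=> k; apply: subset_closure; exists k.
have [y Ky cly] := cluster_seq cK orbK.
by exists y; apply/limsetP; split => //; apply: KX.
Qed.

End Gen3.
Section Sierpinski.
Variables (R : realType) (T : Type) (phi : R -> T) (iota : T -> nat).
Let I (t : R) := 0 <= t <= 1.
Hypothesis Hcl : forall s t, I s -> I t ->
  (forall e : R, 0 < e -> exists t', [/\ I t', phi t' = phi s & `|t - t'| < e]) ->
  phi t = phi s.
Hypothesis Hinj : forall s t, I s -> I t -> iota (phi s) = iota (phi t) -> phi s = phi t.
Hypothesis H01 : phi 0 <> phi 1.

Lemma sier_core a b : I a -> I b -> a < b -> phi a <> phi b ->
  exists s t, [/\ a <= s, s < t, t <= b, phi s = phi a & phi t = phi b] /\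
    (forall r, s < r -> r < t -> phi r <> phi a /\ phi r <> phi b).
Proof.
move=> Ia Ib ab pab.
pose E := [set r | a <= r <= b /\ phi r = phi a].
have Ea : E a by split => //; rewrite lexx ltW.
have hsE : has_sup E by split; [exists a | exists b => r [/andP[]]].
set s := sup E.
have as_ : a <= s by apply: (sup_upper_bound hsE).
have sb : s <= b by apply: ge_sup; [exists a | move=> r [/andP[]]].
have Is : I s by move: Ia Ib => /andP[? ?] /andP[? ?]; apply/andP; split; lra.
have ps : phi s = phi a.
  apply: Hcl => // e e0.
  have [r [/andP[ar rb] pr] sr] := sup_adherent e0 hsE.
  fold s in sr.
  have rs : r <= s by apply: (sup_upper_bound hsE); split => //; apply/andP.
  exists r; split => //.
    by move: Ia Ib => /andP[? ?] /andP[? ?]; apply/andP; split; lra.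
  rewrite ger0_norm; [lra | lra].
have sb' : s < b.
  rewrite lt_neqAle sb andbT; apply/eqP => sbE; apply: pab; by rewrite -ps sbE.
pose E' := [set r | s <= r <= b /\ phi r = phi b].
have E'b : E' b by split => //; rewrite lexx ltW.
have hiE : has_inf E' by split; [exists b | exists s => r [/andP[]]].
set t := inf E'.
have tb : t <= b by move: (ge_inf hiE.2); rewrite /lbound /= => /(_ b E'b).
have st : s <= t by apply: lb_le_inf; [exists b | move=> r [/andP[]]].
have It : I t by move: Ia Ib => /andP[? ?] /andP[? ?]; apply/andP; split; lra.
have pt : phi t = phi b.
  apply: Hcl => // e e0.
  have [r [/andP[sr rb] pr] rt] := inf_adherent e0 hiE.
  fold t in rt.
  have tr : t <= r by apply: (ge_inf hiE.2); split => //; apply/andP; split.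
  exists r; split => //.
    by move: Ia Ib => /andP[? ?] /andP[? ?]; apply/andP; split; lra.
  rewrite ler0_norm; [lra | lra].
have st' : s < t.
  rewrite lt_neqAle st andbT; apply/eqP => stE; apply: pab; by rewrite -ps -pt stE.
exists s, t; split; first by split.
move=> r sr rt; split => pr.
  have : r <= s by apply: (sup_upper_bound hsE); split => //; apply/andP; split; lra.
  lra.
have : t <= r by apply: (ge_inf hiE.2); split => //; apply/andP; split; lra.
lra.
Qed.

Lemma sier_step a b n : I a -> I b -> a < b -> phi a <> phi b ->
  exists a' b', [/\ a <= a', a' < b', b' <= b, phi a' <> phi b' &
    forall r, a' <= r -> r <= b' -> iota (phi r) <> n].
Proof.
move=> Ia Ib ab pab.
have Isub : forall x y r, I x -> I y -> x <= r -> r <= y -> I r.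
  by move=> x y r /andP[? ?] /andP[? ?] ? ?; apply/andP; split; lra.
have [[c [/andP[ac cb] pc]]|nc] := pselect (exists c, a <= c <= b /\ iota (phi c) = n);
  last first.
  exists a, b; split => // r ar rb pr; apply: nc; exists r; split => //.
  by apply/andP.
have Ic : I c by exact: Isub Ia Ib ac cb.
suff [a' [b' [aa' a'b' b'b pa'b' av]]] : exists a' b', [/\ a <= a', a' < b', b' <= b,
    phi a' <> phi b' & forall r, a' <= r -> r <= b' -> phi r <> phi c].
  exists a', b'; split => // r ar rb pr; apply: (av r ar rb).
  apply: Hinj => //; last by rewrite pr pc.
  by apply: (Isub a b) => //; lra.
have [vpa|vpa] := pselect (phi c = phi a).
  have [s [t [[as_ st tb ps pt] hmid]]] := sier_core Ia Ib ab pab.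
  pose u := (s + t) / 2.
  have su : s < u by rewrite /u; lra.
  have ut : u < t by rewrite /u; lra.
  have [pu1 pu2] := hmid u su ut.
  exists u, t; split => //; first by lra.
    by rewrite pt.
  move=> r ur rt; rewrite vpa.
  have [rt'|rt'] := eqVneq r t; first by rewrite rt' pt => /esym.
  have rt2 : r < t by rewrite lt_neqAle rt' rt.
  by have [] := hmid r (lt_le_trans su ur) rt2.
have ac' : a < c.
  rewrite lt_neqAle ac andbT; apply/eqP => acE; apply: vpa; by rewrite acE.
have [s [t [[as_ st tb ps pt] hmid]]] := sier_core Ia Ic ac' (fun h => vpa (esym h)).
pose u := (s + t) / 2.
have su : s < u by rewrite /u; lra.
have ut : u < t by rewrite /u; lra.
have [pu1 pu2] := hmid u su ut.
exists s, u; split => //; first by lra.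
  by rewrite ps => /esym.
move=> r sr ru.
have [rs|rs] := eqVneq r s; first by rewrite rs ps => /esym.
have sr2 : s < r by rewrite lt_neqAle eq_sym rs sr.
by have [] := hmid r sr2 (le_lt_trans ru ut).
Qed.

Lemma sierpinski : False.
Proof.
pose Good (p : R * R) := [/\ I p.1, I p.2, p.1 < p.2 & phi p.1 <> phi p.2].
have : forall pn : (R * R) * nat, exists q : R * R, Good pn.1 ->
    [/\ Good q, pn.1.1 <= q.1, q.2 <= pn.1.2 &
        forall r, q.1 <= r -> r <= q.2 -> iota (phi r) <> pn.2].
  move=> [[a b] n]; have [Gab|nG] := pselect (Good (a, b)); last first.
    by exists (a, b) => /nG.
  move: (Gab); rewrite /Good /= => -[Ia Ib ab pab].
  have [a' [b' [aa' a'b' b'b pa'b' av]]] := sier_step n Ia Ib ab pab.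
  exists (a', b') => _ /=; split => //.
  split => //=; move: Ia Ib => /andP[? ?] /andP[? ?]; apply/andP; split; lra.
move=> /choice[st Hst].
pose fix sq n := if n is m.+1 then st (sq m, m) else (0, 1).
have G0 : Good (0, 1).
  by rewrite /Good /I /=; split => //; rewrite ?lexx ?ler01 ?ltr01.
have Gn : forall n, Good (sq n) /\ (forall r, (sq n.+1).1 <= r -> r <= (sq n.+1).2 ->
       iota (phi r) <> n) /\ (sq n).1 <= (sq n.+1).1 /\ (sq n.+1).2 <= (sq n).2.
  move=> n; have G : Good (sq n).
    elim: n => [|n IH] //; by have [] := Hst (sq n, n) IH.
  by have [] := Hst (sq n, n) G.
pose a n := (sq n).1; pose b n := (sq n).2.
have amono : forall n m, (n <= m)%N -> a n <= a m.
  move=> n m /subnK <-; elim: (m - n)%N => [|k IH]; first by rewrite add0n.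
  by apply: (le_trans IH); rewrite addSn; have [_ [_ []]] := Gn (k + n)%N.
have bmono : forall n m, (n <= m)%N -> b m <= b n.
  move=> n m /subnK <-; elim: (m - n)%N => [|k IH]; first by rewrite add0n.
  by apply: (le_trans _ IH); rewrite addSn; have [_ [_ []]] := Gn (k + n)%N.
have ab : forall n, a n < b n by move=> n; have [[]] := Gn n.
have abnm : forall n m, a n <= b m.
  move=> n m; apply: (le_trans (amono n (maxn n m) (leq_maxl _ _))).
  apply: (le_trans (ltW (ab _))); exact: bmono (leq_maxr _ _).
pose A := range a.
have hsA : has_sup A by split; [exists (a 0%N), 0%N | exists (b 0%N) => _ [n _ <-]].
set ts := sup A.
have ats : forall n, a n <= ts by move=> n; apply: (sup_upper_bound hsA); exists n.
have tsb : forall n, ts <= b n.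
  by move=> n; apply: ge_sup; [exists (a 0%N), 0%N | move=> _ [m _ <-]].
have Ia0 : I (a 0%N) by have [[]] := Gn 0%N.
have Ib0 : I (b 0%N) by have [[]] := Gn 0%N.
have Its : I ts.
  move: Ia0 Ib0 (ats 0%N) (tsb 0%N); rewrite /I => /andP[? ?] /andP[? ?] ? ?.
  by apply/andP; split; lra.
have [_ [H _]] := Gn (iota (phi ts)).
exact: (H ts (ats _) (tsb _)).
Qed.
End Sierpinski.
Section Const.
Context {R : realType} {M Z : metricType R} (X : set M) (F : M -> Z).
Hypothesis FC : {within X, continuous F}.
Hypothesis Finj : forall x y, X x -> X y -> F x = F y -> x = y.

Lemma preim_img (S : set M) : S `<=` X -> X `&` F @^-1` (F @` S) = S.
Proof.
move=> SX; apply/seteqP; split => [w [Xw [s Ss Fsw]]|s Ss].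
  by rewrite -(Finj (SX _ Ss) Xw Fsw).
by split; [apply: SX | exists s].
Qed.

Lemma img_inj (S S' : set M) : S `<=` X -> S' `<=` X -> F @` S = F @` S' -> S = S'.
Proof. by move=> SX S'X e; rewrite -(preim_img SX) -(preim_img S'X) e. Qed.

Variables (C : set (set M)) (Phi : M -> set Z).
Hypothesis cC : countable C.
Hypothesis CX : forall S, C S -> S `<=` X.
Hypothesis Hval : forall xi, X xi -> exists2 S, C S & Phi xi = F @` S.
Hypothesis Hlev : forall xi w, X xi -> X w ->
  (forall e : R, 0 < e -> exists w', [/\ X w', Phi w' = Phi xi & ball w e w']) ->
  Phi w = Phi xi.
Hypothesis pX : path_connected R X.

Lemma const_Phi a b : X a -> X b -> Phi a = Phi b.
Proof.
move=> Xa Xb; apply: contrapT => nab.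
have [gam [gC [g0 [g1 gX]]]] := pX Xa Xb.
have /countable_injP[i0 i0inj] := cC.
pose iota (V : set Z) := i0 (X `&` F @^-1` V).
pose phi t := Phi (gam t).
have Ieq : forall t : R, (0 <= t <= 1) -> `[0, 1]%classic t.
  by move=> t It; rewrite /= in_itv /=.
apply: (@sierpinski R (set Z) phi iota).
- move=> s t Is It H; apply: Hlev; [exact/gX/Ieq | exact/gX/Ieq |].
  move=> e e0; have [d d0 Hd] := wcontP gC (Ieq _ It) e0.
  have [t' [It' pt' tt']] := H d d0.
  exists (gam t'); split => //; first exact/gX/Ieq.
  by apply: Hd; [exact: Ieq | rewrite -ball_normE /=].
- move=> s t Is It.
  have [S1 C1 e1] := Hval (gX _ (Ieq _ Is)).
  have [S2 C2 e2] := Hval (gX _ (Ieq _ It)).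
  rewrite /phi e1 e2 /iota (preim_img (CX C1)) (preim_img (CX C2)) => eq.
  by congr (F @` _); apply: i0inj => //; rewrite inE.
- by change (Phi (gam 0) <> Phi (gam 1)); rewrite g0 g1.
Qed.

End Const.
Theorem corollary19 (R : realType) (M : metricType R) (f finv : M -> M)
  (X : set M) :
  separable M ->
  continuous f -> continuous finv -> cancel f finv -> cancel finv f ->
  (forall x, X x -> X (f x)) ->
  path_connected R X ->
  (forall xi, X xi ->
     precompact_in X (fwd_orbit f xi) \/ precompact_in X (bwd_orbit finv xi)) ->
  countable (omega_sets X f `|` alpha_sets X finv) ->
  (forall O, omega_sets X f O ->
     exists2 xi, dom_attr X f O xi & precompact_in X (fwd_orbit f xi)) ->
  (forall G, alpha_sets X finv G ->
     exists2 xi, dom_rep X finv G xi & precompact_in X (bwd_orbit finv xi)) ->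
  (exists S1 S2, (omega_sets X f `|` alpha_sets X finv) S1 /\
                 (omega_sets X f `|` alpha_sets X finv) S2 /\ S1 <> S2) ->
  ~ (exists (Z : metricType R) (g ginv : Z -> Z) (F : M -> Z),
       [/\ separable Z, continuous g, continuous ginv,
           cancel g ginv & cancel ginv g] /\
       closed_basins g /\ closed_basins ginv /\
       {within X, continuous F} /\
       (forall x y, X x -> X y -> F x = F y -> x = y) /\
       (forall x, X x -> F (f x) = g (F x))).
Proof.
move=> sepM fC fiC ff ffi Xf pX Hpc cW Wrep Arep [S1 [S2 [HS1 [HS2 S12]]]].
move=> [Z [g [ginv [F [[sepZ gC giC gg ggi] [cbg [cbgi [FC [Finj Fconj]]]]]]]]].
have Fitf : forall k x, X x -> X (iter k f x) /\ F (iter k f x) = iter k g (F x).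
  elim => [|k IH] x Xx //=; have [Xk Fk] := IH x Xx.
  by split; [exact: Xf | rewrite Fconj // Fk].
have Fitfi : forall xi, fwd_orbit finv xi `<=` X ->
    forall k, F (iter k finv xi) = iter k ginv (F xi).
  move=> xi OX; elim => [|k IH] //=.
  have Xk : X (iter k finv xi) by apply: OX; exists k.
  have Xk1 : X (finv (iter k finv xi)) by apply: OX; exists k.+1.
  have e : F (iter k finv xi) = g (F (finv (iter k finv xi))) by rewrite -Fconj // ffi.
  by rewrite -IH e gg.
pose C := omega_sets X f `|` alpha_sets X finv.
have CX : forall S, C S -> S `<=` X by move=> S [[xi _ <-]|[xi _ <-]] w [].
have OmOk : forall xi, X xi -> exists2 S, C S & limset setT g (F xi) = F @` S.
  move=> xi Xxi; case: (Hpc xi Xxi) => pc.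
    exists (omega_lim X f xi); first by left; exists xi.
    by apply: (omega_conj FC pc) => k; exact: (Fitf k xi Xxi).2.
  have OX := pc.1.
  have Hc : forall k, iter k g (F (iter k finv xi)) = F xi.
    move=> k; have Xk : X (iter k finv xi) by apply: OX; exists k.
    by rewrite -(Fitf k _ Xk).2 (iterKK ffi).
  have [y [ly pcy e]] := bwd_to_fwd FC fC ffi cbg pc Hc.
  have Xy : X y by case: ly.
  exists (omega_lim X f y); first by left; exists y.
  by rewrite -e; apply: (omega_conj FC pcy) => k; exact: (Fitf k y Xy).2.
have GaOk : forall xi, X xi -> exists2 S, C S & limset setT ginv (F xi) = F @` S.
  move=> xi Xxi; case: (Hpc xi Xxi) => pc; last first.
    exists (alpha_lim X finv xi); first by right; exists xi.
    exact: (omega_conj FC pc (Fitfi xi pc.1)).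
  have Hc : forall k, iter k ginv (F (iter k f xi)) = F xi.
    by move=> k; rewrite (Fitf k xi Xxi).2 (iterKK gg).
  have [y [ly pcy e]] := bwd_to_fwd FC fiC ff cbgi pc Hc.
  have Xy : X y by case: ly.
  exists (alpha_lim X finv y); first by right; exists y.
  by rewrite -e; exact: (omega_conj FC pcy (Fitfi y pcy.1)).
have lev : forall gz : Z -> Z, closed_basins gz -> forall xi w, X xi -> X w ->
    (forall e : R, 0 < e -> exists w', [/\ X w',
        limset setT gz (F w') = limset setT gz (F xi) & ball w e w']) ->
    limset setT gz (F w) = limset setT gz (F xi).
  move=> gz cb xi w Xxi Xw H.
  have cl := cb (limset setT gz (F xi)) (ex_intro2 _ _ (F xi) I erefl).
  suff : dom_attr setT gz (limset setT gz (F xi)) (F w) by case.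
  apply: cl => B /nbhs_ballP[e e0 Be].
  have [d d0 Hd] := wcontP FC Xw e0.
  have [w' [Xw' e' bw']] := H d d0.
  by exists (F w'); split; [split | apply: Be; exact: Hd].
have constOm := const_Phi Finj cW CX OmOk (lev g cbg) pX.
have constGa := const_Phi Finj cW CX GaOk (lev ginv cbgi) pX.
have [x0 Xx0] : exists x0, X x0 by case: HS1 => [[x0 Xx0 _]|[x0 Xx0 _]]; exists x0.
have WX : forall S, omega_sets X f S -> S `<=` X by move=> S WS; apply: CX; left.
have AX : forall S, alpha_sets X finv S -> S `<=` X by move=> S AS; apply: CX; right.
have Wfix : forall S, omega_sets X f S -> F @` S = limset setT g (F x0).
  move=> S WS; have [xi [Xxi eS] pc] := Wrep S WS.
  have e := omega_conj FC pc (fun k => (Fitf k xi Xxi).2).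
  rewrite -eS -e.
  exact: constOm.
have Afix : forall S, alpha_sets X finv S -> F @` S = limset setT ginv (F x0).
  move=> S AS; have [xi [Xxi eS] pc] := Arep S AS.
  rewrite -eS -(omega_conj FC pc (Fitfi xi pc.1)).
  exact: constGa.
have LeqG : forall L G, omega_sets X f L -> alpha_sets X finv G -> L = G.
  move=> L G WL AG.
  have omL : forall xi, X xi -> omega_lim X f xi = L.
    move=> xi Xxi; have Wxi : omega_sets X f (omega_lim X f xi) by exists xi.
    by apply: (img_inj Finj (WX _ Wxi) (WX _ WL)); rewrite !Wfix.
  have alG : forall xi, X xi -> alpha_lim X finv xi = G.
    move=> xi Xxi; have Axi : alpha_sets X finv (alpha_lim X finv xi) by exists xi.
    by apply: (img_inj Finj (AX _ Axi) (AX _ AG)); rewrite !Afix.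
  have [xL [XxL exL] pcL] := Wrep L WL.
  have [rG [XrG erG] pcG] := Arep G AG.
  apply/seteqP; split => w.
    have [y ly] := limset_ne pcG.
    have Xy : X y by case: ly.
    rewrite -(omL y Xy) => lw; rewrite -erG.
    exact: (limset_trans ffi fC ly lw).
  have [y ly] := limset_ne pcL.
  have Xy : X y by case: ly.
  rewrite -(alG y Xy) => lw; rewrite -exL.
  exact: (limset_trans ff fiC ly lw).
apply: S12.
case: HS1 => [W1|A1]; case: HS2 => [W2|A2].
- by apply: (img_inj Finj (WX _ W1) (WX _ W2)); rewrite !Wfix.
- exact: LeqG.
- by apply/esym; exact: LeqG.
- by apply: (img_inj Finj (AX _ A1) (AX _ A2)); rewrite !Afix.
Qed.
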